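(* Consider a parallel system (so $\phi(s)=1$ if and only if $s_k=1$ for at least one $k$), with an arbitrary joint prior distribution of the component states and with inspection error rates $\epsilon_{FA},\epsilon_{FS}\in[0,1/2)$ identical for all components. For any two components $c_i,c_j$ with $p_i\le p_j$, we have $I_i\supseteq I_j$, i.e. $p_{\omega|y_i=1}\le p_{\omega|y_j=1}\le p_{\omega|y_j=0}\le p_{\omega|y_i=0}$, and consequently $\mathrm{VoI}_G(i)\ge\mathrm{VoI}_G(j)$ for every concave function $l^*$. In particular, the most reliable component (the one with the lowest marginal failure probability) has the highest $\mathrm{VoI}_G$, regardless of $l^*$.
   Context: A system consists of $N$ binary components $c_1,\dots,c_N$ with random joint state $s=(s_1,\dots,s_N)\in\{0,1\}^N$ ($s_k=1$: working; $s_k=0$: failed), with arbitrary prior distribution $p_s$. The system state is $u=\phi(s)$ ($u=0$: system failure), $p_\pi=\mathbb{P}[u=0]$, and $p_k=\mathbb{P}[s_k=0]$ is the marginal failure probability of $c_k$. Inspecting $c_k$ yields a binary observation $y_k$ (alarm $y_k=0$, silence $y_k=1$) which, given $s$, depends only on $s_k$, with $\mathbb{P}[y_k=1\mid s_k=0]=\epsilon_{FS}$ and $\mathbb{P}[y_k=0\mid s_k=1]=\epsilon_{FA}$. Then $h_k=\mathbb{P}[y_k=0]=\epsilon_{FA}+(1-\epsilon_{FA}-\epsilon_{FS})p_k$; posterior system failure probabilities are $p_{\omega|y_k=b}=\mathbb{P}[u=0\mid y_k=b]$ (defined when the conditioning event has positive probability), and $I_k=[p_{\omega|y_k=1},p_{\omega|y_k=0}]$.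 Global metric: for a concave $l^*:[0,1]\to\mathbb{R}$, $L^G_\pi=l^*(p_\pi)$, $L^G_\omega(k)=h_k\,l^*(p_{\omega|y_k=0})+(1-h_k)\,l^*(p_{\omega|y_k=1})$ (a term with zero probability is omitted), and $\mathrm{VoI}_G(k)=L^G_\pi-L^G_\omega(k)$. *)

(* Defs.v *)
(* Finite discrete probability over the joint component
   states s : {ffun 'I_N -> bool} (true = working, false = failed). *)
From mathcomp Require Import all_boot all_order all_algebra.
Set Implicit Arguments. Unset Strict Implicit. Unset Printing Implicit Defensive.
Import Order.TTheory GRing.Theory Num.Theory.
Local Open Scope ring_scope.

Section Defs.
Variables (R : realFieldType) (N : nat).

Definition state := {ffun 'I_N -> bool}.

Definition is_prior (ps : state -> R) : Prop :=
  (forall s, 0 <= ps s) /\ \sum_(s : state) ps s = 1.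

Definition phi_par (s : state) : bool := [exists k, s k].

(* observation model P[y_k = yk | s_k = sk]; yk = false is the alarm (y=0) *)
Definition lik (eFA eFS : R) (sk yk : bool) : R :=
  if sk then (if yk then 1 - eFA else eFA)
  else (if yk then eFS else 1 - eFS).

Definition pmarg (ps : state -> R) (k : 'I_N) : R :=
  \sum_(s : state | ~~ s k) ps s.

Definition p_pi (phi : state -> bool) (ps : state -> R) : R :=
  \sum_(s : state | ~~ phi s) ps s.

Definition prob_y (ps : state -> R) (eFA eFS : R) (k : 'I_N) (b : bool) : R :=
  \sum_(s : state) ps s * lik eFA eFS (s k) b.

Definition prob_fail_y (phi : state -> bool) (ps : state -> R) (eFA eFS : R)
    (k : 'I_N) (b : bool) : R :=
  \sum_(s : state | ~~ phi s) ps s * lik eFA eFS (s k) b.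

Definition hk (ps : state -> R) (eFA eFS : R) (k : 'I_N) : R :=
  prob_y ps eFA eFS k false.

(* posterior p_{omega | y_k = b} (meaningful only when P[y_k = b] > 0) *)
Definition post (phi : state -> bool) (ps : state -> R) (eFA eFS : R)
    (k : 'I_N) (b : bool) : R :=
  prob_fail_y phi ps eFA eFS k b / prob_y ps eFA eFS k b.

Definition concave01 (l : R -> R) : Prop :=
  forall x y t : R, 0 <= x <= 1 -> 0 <= y <= 1 -> 0 <= t <= 1 ->
    t * l x + (1 - t) * l y <= l (t * x + (1 - t) * y).

Definition LG_omega (l : R -> R) (phi : state -> bool) (ps : state -> R)
    (eFA eFS : R) (k : 'I_N) : R :=
  let h := hk ps eFA eFS k in
  (if h == 0 then 0 else h * l (post phi ps eFA eFS k false)) +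
  (if 1 - h == 0 then 0 else (1 - h) * l (post phi ps eFA eFS k true)).

Definition VoI_G (l : R -> R) (phi : state -> bool) (ps : state -> R)
    (eFA eFS : R) (k : 'I_N) : R :=
  l (p_pi phi ps) - LG_omega l phi ps eFA eFS k.

End Defs.

(* Main.v *)
Require Import Defs.
From mathcomp Require Import all_boot all_order all_algebra.
Import Order.TTheory GRing.Theory Num.Theory.
Local Open Scope ring_scope.
From mathcomp Require Import ring lra.
Set Implicit Arguments. Unset Strict Implicit.
Local Open Scope ring_scope.
Section S.
Variables (R : realFieldType) (N : nat) (ps : state N -> R) (eFA eFS : R).
Hypothesis Hp : is_prior ps.

Let s0 : state N := [ffun _ => false].
Let q := ps s0.

Lemma sumC_k (k : 'I_N) : \sum_(s : state N | s k) ps s = 1 - pmarg ps k.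
Proof.
case: Hp => _ H1; by rewrite /pmarg -H1 [X in _ = X - _](bigID (fun s : state N => s k)) /= addrK.
Qed.

Lemma q_le_p k : q <= pmarg ps k.
Proof.
case: Hp => H0 _; rewrite /pmarg (bigD1 s0) /=; last by rewrite ffunE.
by rewrite lerDl sumr_ge0.
Qed.

Lemma p_le1 k : pmarg ps k <= 1.
Proof.
have := sumC_k k; case: Hp => H0 _ E.
have : 0 <= \sum_(s : state N | s k) ps s by rewrite sumr_ge0.
rewrite E => ?. lra.
Qed.

Lemma q_ge0 : 0 <= q.
Proof. by case: Hp => H0 _; apply: H0. Qed.

Lemma pfy k b : prob_fail_y (@phi_par N) ps eFA eFS k b = q * lik eFA eFS false b.
Proof.
rewrite /prob_fail_y (big_pred1 s0) ?ffunE //.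
move=> s /=; rewrite /phi_par negb_exists.
apply/forallP/eqP => [H|->]; last by move=> x; rewrite ffunE.
by apply/ffunP => x; rewrite ffunE; apply/negbTE.
Qed.

Lemma py k b : prob_y ps eFA eFS k b =
  (1 - pmarg ps k) * lik eFA eFS true b + pmarg ps k * lik eFA eFS false b.
Proof.
rewrite /prob_y (bigID (fun s : state N => s k)) /= -sumC_k /pmarg !mulr_suml.
by congr (_ + _); apply: eq_bigr => s Hs; rewrite ?(negbTE Hs) ?Hs mulrC.
Qed.
End S.
Section S2.
Variable R : realFieldType.
Lemma dm (h b : R) : 0 <= b -> b <= h -> h * (b / h) = b.
Proof.
move=> b0 bh; have [h0|hn] := eqVneq h 0; first by rewrite h0 mul0r; lra.
by rewrite mulrC divfK.
Qed.

Lemma dr (h b : R) : 0 <= b -> b <= h -> 0 <= b / h <= 1.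
Proof.
move=> b0 bh; have [h0|hn] := eqVneq h 0; first by rewrite h0 invr0 mulr0 lexx ler01.
have hp : 0 < h by rewrite lt_def hn; lra.
by rewrite divr_ge0 ?ler_pdivrMr ?mul1r //; lra.
Qed.

Lemma chord (l : R -> R) (cl : concave01 l) x1 x2 y : 0 <= x1 -> x2 <= 1 -> x1 <= y -> y <= x2 ->
  x1 < x2 ->
  (y - x1) / (x2 - x1) * l x2 + (1 - (y - x1) / (x2 - x1)) * l x1 <= l y.
Proof.
move=> h1 h2 h3 h4 h5.
have d0 : 0 < x2 - x1 by lra.
have t01 : 0 <= (y - x1) / (x2 - x1) <= 1 by apply: dr; lra.
have := cl x2 x1 _ _ _ t01; rewrite (_ : _ * x2 + _ * x1 = y).
  by apply; lra.
by field; rewrite gt_eqF.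
Qed.

Lemma mix (l : R -> R) (cl : concave01 l) hi hj x1 x2 y1 y2 :
  0 <= hi <= 1 -> 0 <= hj <= 1 -> 0 <= x1 -> x2 <= 1 -> x1 <= y1 -> y1 <= y2 -> y2 <= x2 ->
  hi * x2 + (1 - hi) * x1 = hj * y2 + (1 - hj) * y1 ->
  hi * l x2 + (1 - hi) * l x1 <= hj * l y2 + (1 - hj) * l y1.
Proof.
move=> /andP[hi0 hi1] /andP[hj0 hj1] h1 h2 h3 h4 h5 hm.
have [e|lt] := eqVneq x1 x2.
  have e1 : y1 = x1 by lra.
  have e2 : y2 = x1 by lra.
  rewrite e1 e2 -e; rewrite le_eqVlt; apply/orP; left; apply/eqP; ring.
have lt' : x1 < x2 by rewrite lt_def eq_sym lt; lra.
have c1 := chord cl (y:=y1) h1 h2 h3 (le_trans h4 h5) lt'.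
have c2 := chord cl (y:=y2) h1 h2 (le_trans h3 h4) h5 lt'.
set t1 := (y1 - x1) / (x2 - x1) in c1.
set t2 := (y2 - x1) / (x2 - x1) in c2.
have HT : hj * t2 + (1 - hj) * t1 = hi.
  rewrite /t1 /t2; apply: (@mulIf _ (x2 - x1)); first by rewrite subr_eq0 eq_sym.
  rewrite mulrDl -!mulrA !mulVf ?mulr1 ?subr_eq0 1?eq_sym //; lra.
rewrite -HT.
apply: le_trans (lerD (ler_wpM2l hj0 c2) (ler_wpM2l _ c1)); last lra.
rewrite le_eqVlt; apply/orP; left; apply/eqP; ring.
Qed.
End S2.
Theorem mainTheorem2 (R : realFieldType) (N : nat) (ps : state N -> R)
    (eFA eFS : R) (i j : 'I_N) :
  is_prior ps ->
  0 <= eFA -> eFA < 1 / 2 -> 0 <= eFS -> eFS < 1 / 2 ->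
  pmarg ps i <= pmarg ps j ->
  let phi := @phi_par N in
  (* I_i contains I_j: each inequality whenever both sides are defined *)
  (prob_y ps eFA eFS i true > 0 -> prob_y ps eFA eFS j true > 0 ->
     post phi ps eFA eFS i true <= post phi ps eFA eFS j true) /\
  (prob_y ps eFA eFS j true > 0 -> prob_y ps eFA eFS j false > 0 ->
     post phi ps eFA eFS j true <= post phi ps eFA eFS j false) /\
  (prob_y ps eFA eFS j false > 0 -> prob_y ps eFA eFS i false > 0 ->
     post phi ps eFA eFS j false <= post phi ps eFA eFS i false) /\
  (* VoI ordering for every concave l* *)
  (forall l : R -> R, concave01 l ->
     VoI_G l phi ps eFA eFS j <= VoI_G l phi ps eFA eFS i).
Proof.
move=> Hp eA0 eA1 eS0 eS1 pij phi.
have qi := q_le_p Hp i; have qj := q_le_p Hp j.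
have pi1 := p_le1 Hp i; have pj1 := p_le1 Hp j.
have q0 := q_ge0 Hp.
rewrite /VoI_G /LG_omega /post /hk !pfy !(py _ _ Hp) /=.
move: (pmarg ps i) (pmarg ps j) (ps [ffun=> false]) qi qj pi1 pj1 q0 pij => pi pj q qi qj pi1 pj1 q0 pij.
have E p : (1-p)*(1-eFA)+p*eFS = 1 - ((1-p)*eFA + p*(1-eFS)) by ring.
rewrite !E.
have c0 : 0 < 1 - eFA - eFS by lra.
have hij : (1-pi)*eFA + pi*(1-eFS) <= (1-pj)*eFA + pj*(1-eFS).
  have := mulr_ge0 (ltW c0) (_ : 0 <= pj - pi); nra.
have ai : q*(1-eFS) <= (1-pi)*eFA + pi*(1-eFS).
  have := mulr_ge0 (_ : 0 <= eFA) (_ : 0 <= 1 - pi); nra.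
have aj : q*(1-eFS) <= (1-pj)*eFA + pj*(1-eFS).
  have := mulr_ge0 (_ : 0 <= eFA) (_ : 0 <= 1 - pj); nra.
have bj : q*eFS <= 1 - ((1-pj)*eFA + pj*(1-eFS)).
  have := mulr_ge0 (_ : 0 <= 1 - eFA) (_ : 0 <= 1 - pj); nra.
have bi : q*eFS <= 1 - ((1-pi)*eFA + pi*(1-eFS)).
  have := mulr_ge0 (_ : 0 <= 1 - eFA) (_ : 0 <= 1 - pi); nra.
have abj : q*eFS * ((1-pj)*eFA + pj*(1-eFS)) <= q*(1-eFS) * (1 - ((1-pj)*eFA + pj*(1-eFS))).
  have := mulr_ge0 q0 (mulr_ge0 (ltW c0) (_ : 0 <= 1 - pj)); nra.
have a0 : 0 <= q*(1-eFS) by apply: mulr_ge0; lra.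
have b0 : 0 <= q*eFS by apply: mulr_ge0; lra.
have qa : q*(1-eFS) = 0 -> q*eFS = 0.
  move/eqP; rewrite mulf_eq0 => /orP[/eqP->|/eqP h]; [by rewrite mul0r | lra].
move: (q*(1-eFS)) (q*eFS) ((1-pi)*eFA + pi*(1-eFS)) ((1-pj)*eFA + pj*(1-eFS)) hij ai aj bj bi abj a0 b0 qa.
move=> a b hi hj hij ai aj bj bi abj a0 b0 qa.
have ifz (h X : R) : (if h == 0 then 0 else h * X) = h * X.
  by case: eqP => // ->; rewrite mul0r.
split; [|split; [|split]].
- move=> p1 p2; apply: ler_wpM2l => //; rewrite lef_pV2 ?posrE //; lra.
- move=> p1 p2; rewrite ler_pdivrMr // mulrAC ler_pdivlMr //; lra.
- move=> p1 p2; apply: ler_wpM2l => //; rewrite lef_pV2 ?posrE //; lra.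
move=> l cl; rewrite !ifz lerB //.
have [a00|an] := eqVneq a 0.
  rewrite a00 (qa a00) !mul0r le_eqVlt; apply/orP; left; apply/eqP; ring.
have ap : 0 < a by rewrite lt_def an.
have hip : 0 < hi by lra.
have hjp : 0 < hj by lra.
have [ri _] := andP (dr b0 bi).
have [_ rj] := andP (dr a0 ai).
have [ri' _] := andP (dr b0 bj).
apply: (mix cl) => //; try lra.
- have [e|ne] := eqVneq (1 - hj) 0.
    have b00 : b = 0 by lra.
    by rewrite b00 !mul0r.
  have p2 : 0 < 1 - hj by rewrite lt_def ne; lra.
  apply: ler_wpM2l => //; rewrite lef_pV2 ?posrE //; lra.
- have [e|ne] := eqVneq (1 - hj) 0.
    by rewrite e invr0 mulr0 divr_ge0 //; lra.
  have p2 : 0 < 1 - hj by rewrite lt_def ne; lra.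
  rewrite ler_pdivrMr // mulrAC ler_pdivlMr //; lra.
- apply: ler_wpM2l => //; rewrite lef_pV2 ?posrE //; lra.
- by rewrite !dm //; lra.
Qed.
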